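(* Let $b>0$ and let $F$ be as defined in the context. Then $F$ is strictly decreasing on $(x_\infty,x_0)$, $F\in C^\infty((x_\infty,x_0])$, and $$\lim_{x\downarrow x_\infty}F(x)=+\infty,\qquad \lim_{x\downarrow x_\infty}F'(x)=-\infty.$$
   Context: Constants: $a\in\mathbb{R}$, $b>0$, $\sigma>0$, $\rho>0$, $c>0$, $\alpha>0$. For $\beta<0$, let $D_\beta(x)=\frac{e^{-x^2/4}}{\Gamma(-\beta)}\int_0^\infty t^{-\beta-1}e^{-t^2/2-xt}\,dt$, and $\psi(x)=e^{\frac{(bx-a)^2}{2\sigma^2 b}}D_{-\rho/b}\big(-\frac{bx-a}{\sigma b}\sqrt{2b}\big)$, the positive strictly increasing fundamental solution of $\frac12\sigma^2u''+(a-bx)u'-\rho u=0$ (it satisfies $\psi''\psi-(\psi')^2>0$). Let $x_0$ (resp. $x_\infty$) be the unique solution on $(c,\infty)$ of $(x-c)\psi'(x)-\psi(x)=0$ (resp. $(x-c)\psi''(x)-\psi'(x)=0$); one has $c<x_\infty<x_0$. For $x\in(x_\infty,x_0]$ define $F(x)=\int_x^{x_0}\Theta(z)\,dz$ where $$\Theta(z)=\frac{\big[\psi'''(z)\big((z-c)\psi'(z)-\psi(z)\big)-\psi''(z)\big((z-c)\psi''(z)-\psi'(z)\big)\big]\psi(z)}{-\alpha\big[\psi''(z)\psi(z)-\psi'(z)^2\big]\big[(z-c)\psi''(z)-\psi'(z)\big]}.$$ *)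

(* Defs.v *)
From Stdlib Require Import Reals.
From Coquelicot Require Import Coquelicot.
Open Scope R_scope.

Definition Gamma (s : R) : R :=
  RInt_gen (fun t => Rpower t (s - 1) * exp (- t)) (at_right 0) (Rbar_locally p_infty).

(* Parabolic cylinder function, integral representation for beta < 0:
   D_beta(x) = e^{-x^2/4}/Gamma(-beta) * int_0^oo t^{-beta-1} e^{-t^2/2 - x t} dt *)
Definition Dpc (beta x : R) : R :=
  exp (- x ^ 2 / 4) / Gamma (- beta) *
  RInt_gen (fun t => Rpower t (- beta - 1) * exp (- t ^ 2 / 2 - x * t))
           (at_right 0) (Rbar_locally p_infty).

Definition psi (a b sigma rho : R) (x : R) : R :=
  exp ((b * x - a) ^ 2 / (2 * sigma ^ 2 * b)) *
  Dpc (- rho / b) (- ((b * x - a) / (sigma * b)) * sqrt (2 * b)).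

Definition Theta (a b sigma rho c alpha : R) (z : R) : R :=
  let p := psi a b sigma rho in
  let p0 := p z in
  let p1 := Derive_n p 1 z in
  let p2 := Derive_n p 2 z in
  let p3 := Derive_n p 3 z in
  ((p3 * ((z - c) * p1 - p0) - p2 * ((z - c) * p2 - p1)) * p0) /
  (- alpha * (p2 * p0 - p1 ^ 2) * ((z - c) * p2 - p1)).

Definition Ffun (a b sigma rho c alpha x0 : R) (x : R) : R :=
  RInt (Theta a b sigma rho c alpha) x x0.

(* Main.v *)
Require Import Defs.
From Stdlib Require Import Reals Lra Lia FunctionalExtensionality.
From Coquelicot Require Import Coquelicot.
Open Scope R_scope.

Lemma exRI_pos (f : R -> R) a b : 0 < a -> a <= b ->
  (forall t, 0 < t -> continuous f t) -> ex_RInt f a b.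
Proof.
  intros Ha Hab Hc. apply (ex_RInt_continuous (V:=R_CompleteNormedModule)). intros z Hz. apply Hc.
  rewrite Rmin_left in Hz by lra. lra.
Qed.

Lemma RInt_mono_int (f : R -> R) a b a0 b0 :
  0 < a -> a <= a0 -> a0 <= b0 -> b0 <= b ->
  (forall t, 0 < t -> continuous f t) -> (forall t, 0 < t -> 0 <= f t) ->
  RInt f a0 b0 <= RInt f a b.
Proof.
  intros Ha H1 H2 H3 Hc Hp.
  assert (E1 := RInt_Chasles f a a0 b0 (exRI_pos f a a0 Ha H1 Hc) (exRI_pos f a0 b0 ltac:(lra) H2 Hc)).
  assert (E2 := RInt_Chasles f a b0 b (exRI_pos f a b0 Ha ltac:(lra) Hc) (exRI_pos f b0 b ltac:(lra) H3 Hc)).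
  change plus with Rplus in E1, E2.
  assert (0 <= RInt f a a0).
  { apply RInt_ge_0; auto. apply exRI_pos; auto. intros; apply Hp; lra. }
  assert (0 <= RInt f b0 b).
  { apply RInt_ge_0; auto. apply exRI_pos; auto; lra. intros; apply Hp; lra. }
  lra.
Qed.

Lemma gen_exist (f : R -> R) B :
  (forall t, 0 < t -> continuous f t) -> (forall t, 0 < t -> 0 <= f t) ->
  (forall a b, 0 < a -> a <= b -> RInt f a b <= B) ->
  exists L, is_RInt_gen f (at_right 0) (Rbar_locally p_infty) L /\
     (forall a b, 0 < a -> a <= b -> RInt f a b <= L).
Proof.
  intros Hc Hp HB.
  set (E := fun y => exists a b, 0 < a /\ a <= b /\ y = RInt f a b).
  destruct (completeness E) as [L [HL1 HL2]].
  { exists B. intros y [a [b [Ha [Hab ->]]]]. auto. }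
  { exists (RInt f 1 1). exists 1, 1. repeat split; lra. }
  exists L. split.
  2:{ intros a b Ha Hab. apply HL1. exists a, b. auto. }
  intros P [eps Heps].
  assert (Hex : exists a0 b0, 0 < a0 /\ a0 <= b0 /\ L - eps < RInt f a0 b0).
  { destruct (Classical_Prop.classic (exists a0 b0, 0 < a0 /\ a0 <= b0 /\ L - eps < RInt f a0 b0)) as [H|H]; auto.
    exfalso. assert (L <= L - eps).
    { apply HL2. intros y [a [b [Ha [Hab ->]]]].
      apply Rnot_lt_le. intro Hl. apply H. exists a, b. auto. }
    destruct eps; simpl in *; lra. }
  destruct Hex as [a0 [b0 [Ha0 [Hab0 Hl]]]].
  exists (fun a => 0 < a < a0) (fun b => b0 < b).
  - exists (mkposreal a0 Ha0). intros y Hy Hy0. split; auto.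
    unfold ball in Hy; simpl in Hy; unfold AbsRing_ball, abs, minus, plus, opp in Hy; simpl in Hy.
    apply Rabs_def2 in Hy. lra.
  - exists b0. auto.
  - intros a b [Ha Ha'] Hb. exists (RInt f a b : R). split.
    + exact (RInt_correct (V:=R_CompleteNormedModule) f a b (exRI_pos f a b ltac:(lra) ltac:(lra) Hc)).
    + apply Heps. 
      assert (RInt f a0 b0 <= RInt f a b) by (apply RInt_mono_int; auto; lra).
      assert (RInt f a b <= L) by (apply HL1; exists a, b; repeat split; lra).
      unfold ball; simpl; unfold AbsRing_ball, abs, minus, plus, opp; simpl.
      apply Rabs_def1; lra.
Qed.

Lemma exp_mono x y : x <= y -> exp x <= exp y.
Proof. intros [H|H]. left; apply exp_increasing; auto. subst; lra. Qed.

Lemma Rpower_le_exp t y : 0 < t -> 0 <= y -> Rpower t y <= exp (y * t).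
Proof.
  intros Ht Hy. unfold Rpower. apply exp_mono. apply Rmult_le_compat_l; auto.
  assert (t < exp t) by (pose proof (exp_ineq1_le t); lra).
  rewrite <- (ln_exp t) at 2. left; apply ln_increasing; auto.
Qed.

Lemma exd_cont (f : R -> R) x : ex_derive f x -> continuous f x.
Proof. intros H. exact (ex_derive_continuous (K:=R_AbsRing) (V:=R_NormedModule) f x H). Qed.

Definition w (nu : R) (k : nat) (s t : R) :=
  Rpower t (nu - 1 + INR k) * exp (- t ^ 2 / 2 + s * t).

Lemma w_pos nu k s t : 0 < w nu k s t.
Proof. unfold w, Rpower. apply Rmult_lt_0_compat; apply exp_pos. Qed.

Lemma w_cont nu k s t : 0 < t -> continuous (w nu k s) t.
Proof.
  intros Ht. apply exd_cont. unfold w, Rpower. auto_derive. auto.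
Qed.

Lemma w_S nu k s t : 0 < t -> w nu (S k) s t = t * w nu k s t.
Proof.
  intros Ht. unfold w. rewrite S_INR.
  replace (nu - 1 + (INR k + 1)) with ((nu - 1 + INR k) + 1) by ring.
  rewrite Rpower_plus, Rpower_1 by auto. ring.
Qed.

Lemma w_shift nu k s h t : w nu k (s + h) t = w nu k s t * exp (h * t).
Proof.
  unfold w. rewrite Rmult_assoc, <- exp_plus. f_equal. f_equal. ring.
Qed.

Definition gdom nu t := Rpower t nu / t / (1 + Rpower t nu) ^ 2.
Definition Gdom nu t := - / (nu * (1 + Rpower t nu)).

Lemma Gdom_deriv nu t : 0 < nu -> 0 < t -> is_derive (Gdom nu) t (gdom nu t).
Proof.
  intros Hn Ht. unfold Gdom, gdom, Rpower.
  assert (0 < exp (nu * ln t)) by apply exp_pos.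
  auto_derive.
  - repeat split; auto. apply Rgt_not_eq. apply Rmult_lt_0_compat; lra.
  - field. repeat split; lra.
Qed.

Lemma gdom_cont nu t : 0 < t -> continuous (gdom nu) t.
Proof.
  intros Ht. apply exd_cont. unfold gdom, Rpower.
  assert (0 < exp (nu * ln t)) by apply exp_pos.
  auto_derive. repeat split; try lra. apply Rgt_not_eq; nra.
Qed.

Lemma RInt_gdom nu a b : 0 < nu -> 0 < a -> a <= b -> RInt (gdom nu) a b <= / nu.
Proof.
  intros Hn Ha Hab.
  assert (H := is_RInt_derive (V:=R_CompleteNormedModule) (Gdom nu) (gdom nu) a b).
  rewrite Rmin_left, Rmax_right in H by lra.
  rewrite (is_RInt_unique _ _ _ _ (H (fun x Hx => Gdom_deriv nu x Hn ltac:(lra))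
            (fun x Hx => gdom_cont nu x ltac:(lra)))).
  change (minus (Gdom nu b) (Gdom nu a)) with (Gdom nu b - Gdom nu a).
  unfold Gdom, Rpower.
  assert (0 < exp (nu * ln a)) by apply exp_pos.
  assert (0 < exp (nu * ln b)) by apply exp_pos.
  set (u := exp (nu * ln a)) in *. set (v := exp (nu * ln b)) in *.
  assert (0 < / (nu * (1 + v))) by (apply Rinv_0_lt_compat; apply Rmult_lt_0_compat; lra).
  assert (/ (nu * (1 + u)) <= / nu).
  { apply Rinv_le_contravar; auto. rewrite <- (Rmult_1_r nu) at 1.
    apply Rmult_le_compat_l; lra. }
  lra.
Qed.

Definition Kb nu k s := 4 * exp ((INR k + 2 * nu + s) ^ 2 / 2).

Lemma w_le_gdom nu k s t : 0 < nu -> 0 < t -> w nu k s t <= Kb nu k s * gdom nu t.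
Proof.
  intros Hn Ht. unfold w, gdom, Kb.
  replace (nu - 1 + INR k) with (nu + (- (1)) + INR k) by ring.
  rewrite !Rpower_plus, Rpower_Ropp, Rpower_1 by auto.
  assert (Hu := Rpower_le_exp t nu Ht ltac:(lra)).
  assert (Hk := Rpower_le_exp t (INR k) Ht (pos_INR k)).
  assert (0 < Rpower t nu) by (unfold Rpower; apply exp_pos).
  assert (0 < Rpower t (INR k)) by (unfold Rpower; apply exp_pos).
  set (u := Rpower t nu) in *. set (P := Rpower t (INR k)) in *.
  set (c := INR k + 2 * nu + s).
  assert (1 <= exp (nu * t)) by (pose proof (exp_ineq1_le (nu*t)); assert (0 < nu * t) by (apply Rmult_lt_0_compat; lra); lra).
  assert (Hq1 : (1 + u) ^ 2 <= 4 * exp (2 * nu * t)).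
  { replace (2 * nu * t) with (nu * t + nu * t) by ring. rewrite exp_plus.
    assert (0 <= 1 + u <= 2 * exp (nu * t)) by lra. nra. }
  assert (Hq2 : P * exp (- t ^ 2 / 2 + s * t) * (1 + u) ^ 2 <= 4 * exp (c ^ 2 / 2)).
  { apply Rle_trans with (exp (INR k * t) * exp (- t ^ 2 / 2 + s * t) * (4 * exp (2 * nu * t))).
    - assert (0 < exp (- t ^ 2 / 2 + s * t)) by apply exp_pos.
      assert (0 <= (1+u)^2) by (apply pow2_ge_0).
      apply Rmult_le_compat; [nra | nra | apply Rmult_le_compat_r; lra | exact Hq1].
    - replace (exp (INR k * t) * exp (- t ^ 2 / 2 + s * t) * (4 * exp (2 * nu * t)))
        with (4 * exp (c * t - t^2/2)).
      2:{ assert (exp (c*t - t^2/2) = exp (INR k * t) * exp (- t ^ 2 / 2 + s * t) * exp (2*nu*t))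
            by (rewrite <- !exp_plus; apply f_equal; unfold c; field).
          rewrite H2. ring. }
      apply Rmult_le_compat_l; [lra|]. apply exp_mono.
      assert (0 <= (t - c)^2) by apply pow2_ge_0. nra. }
  assert (0 < (1 + u) ^ 2) by (apply pow_lt; lra).
  apply Rmult_le_reg_r with ((1 + u) ^ 2 * t / u).
  { apply Rdiv_lt_0_compat; auto. apply Rmult_lt_0_compat; auto. }
  replace (u * / t * P * exp (- t ^ 2 / 2 + s * t) * ((1 + u) ^ 2 * t / u))
    with (P * exp (- t ^ 2 / 2 + s * t) * (1 + u) ^ 2) by (field; lra).
  replace (4 * exp (c ^ 2 / 2) * (u / t / (1 + u) ^ 2) * ((1 + u) ^ 2 * t / u))
    with (4 * exp (c ^ 2 / 2)) by (field; lra).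
  auto.
Qed.

Notation F0 := (at_right 0).
Notation Finf := (Rbar_locally p_infty).

Lemma RInt_w_bound nu k s a b : 0 < nu -> 0 < a -> a <= b ->
  RInt (w nu k s) a b <= Kb nu k s / nu.
Proof.
  intros Hn Ha Hab.
  assert (Hk : 0 < Kb nu k s) by (unfold Kb; apply Rmult_lt_0_compat; [lra| apply exp_pos]).
  apply Rle_trans with (RInt (fun t => Kb nu k s * gdom nu t) a b).
  - apply RInt_le; auto.
    + apply exRI_pos; auto. intros; apply w_cont; auto.
    + apply exRI_pos; auto. intros. apply (continuous_mult (fun _ => Kb nu k s) (gdom nu)).
      apply continuous_const. apply gdom_cont; auto.
    + intros x Hx. apply w_le_gdom; auto; lra.
  - assert (E := RInt_scal (V:=R_CompleteNormedModule) (gdom nu) a b (Kb nu k s)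
       (exRI_pos _ a b Ha Hab (fun t Ht => gdom_cont nu t Ht))).
    change (RInt (fun x => Kb nu k s * gdom nu x) a b = Kb nu k s * RInt (gdom nu) a b) in E.
    rewrite E. unfold Rdiv. apply Rmult_le_compat_l; [lra|]. apply RInt_gdom; auto.
Qed.

Definition M nu k s := RInt_gen (w nu k s) F0 Finf.

Lemma M_correct nu k s : 0 < nu ->
  is_RInt_gen (w nu k s) F0 Finf (M nu k s) /\
  (forall a b, 0 < a -> a <= b -> RInt (w nu k s) a b <= M nu k s).
Proof.
  intros Hn.
  destruct (gen_exist (w nu k s) (Kb nu k s / nu)) as [L [HL1 HL2]].
  - intros; apply w_cont; auto.
  - intros; left; apply w_pos.
  - intros; apply RInt_w_bound; auto.
  - unfold M. rewrite (is_RInt_gen_unique _ _ HL1). auto.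
Qed.

Lemma M_pos nu k s : 0 < nu -> 0 < M nu k s.
Proof.
  intros Hn. destruct (M_correct nu k s Hn) as [_ H].
  apply Rlt_le_trans with (RInt (w nu k s) 1 2); [|apply H; lra].
  apply RInt_gt_0; [lra| intros; apply w_pos | intros; apply w_cont; lra].
Qed.

Lemma isg_lin3 (f1 f2 f3 : R -> R) l1 l2 l3 a1 a2 a3 :
  is_RInt_gen f1 F0 Finf l1 -> is_RInt_gen f2 F0 Finf l2 -> is_RInt_gen f3 F0 Finf l3 ->
  is_RInt_gen (fun t => a1 * f1 t + a2 * f2 t + a3 * f3 t) F0 Finf (a1 * l1 + a2 * l2 + a3 * l3).
Proof.
  intros H1 H2 H3.
  exact (is_RInt_gen_plus _ _ _ _ (is_RInt_gen_plus _ _ _ _ (is_RInt_gen_scal _ a1 _ H1) (is_RInt_gen_scal _ a2 _ H2)) (is_RInt_gen_scal _ a3 _ H3)).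
Qed.

Lemma isg_scal (f : R -> R) l a :
  is_RInt_gen f F0 Finf l -> is_RInt_gen (fun t => a * f t) F0 Finf (a * l).
Proof. intros H. exact (is_RInt_gen_scal _ a _ H). Qed.

Lemma exp_taylor1 x : Rabs (exp x - 1 - x) <= x ^ 2 * exp (Rabs x).
Proof.
  destruct (MVT_cor4 (fun y => exp y - 1 - y) (fun y => exp y - 1) 0 (Rabs x)) with (b := x)
    as [c [Hc1 Hc2]].
  { intros c _. auto_derive; auto. ring. }
  { rewrite Rminus_0_r; lra. }
  destruct (MVT_cor4 exp exp 0 (Rabs c)) with (b := c) as [d [Hd1 Hd2]].
  { intros d _. auto_derive; auto. ring. }
  { rewrite Rminus_0_r; lra. }
  rewrite exp_0 in Hc1, Hd1. rewrite !Rminus_0_r in *.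
  replace (exp x - 1 - x) with ((exp c - 1) * x) by lra.
  rewrite Hd1. rewrite !Rabs_mult.
  assert (Rabs (exp d) <= exp (Rabs x)).
  { rewrite Rabs_pos_eq by (left; apply exp_pos). apply exp_mono.
    apply Rle_trans with (Rabs d); [apply Rle_abs|lra]. }
  assert (0 <= Rabs c) by apply Rabs_pos.
  assert (0 <= Rabs x) by apply Rabs_pos.
  rewrite <- (pow2_abs x).
  apply Rle_trans with (exp (Rabs x) * Rabs x * Rabs x).
  - apply Rmult_le_compat_r; auto. apply Rmult_le_compat; auto using Rabs_pos.
  - right; ring.
Qed.

Lemma w_diff_bound nu k s h t : 0 < t -> Rabs h <= 1 ->
  Rabs (1 * w nu k (s + h) t + (-1) * w nu k s t + (- h) * w nu (S k) s t)
   <= h ^ 2 * w nu (S (S k)) (s + 1) t.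
Proof.
  intros Ht Hh.
  rewrite (w_shift nu k s h t), (w_S nu (S k) (s+1) t Ht), (w_S nu k (s+1) t Ht), (w_S nu k s t Ht).
  rewrite (w_shift nu k s 1 t).
  assert (Hw := w_pos nu k s t). set (W := w nu k s t) in *.
  replace (1 * (W * exp (h * t)) + -1 * W + - h * (t * W)) with (W * (exp (h*t) - 1 - h * t)) by ring.
  rewrite Rabs_mult, Rabs_pos_eq by lra.
  assert (H := exp_taylor1 (h * t)).
  assert (exp (Rabs (h * t)) <= exp (1 * t)).
  { apply exp_mono. rewrite Rabs_mult, (Rabs_pos_eq t) by lra. apply Rmult_le_compat_r; lra. }
  assert (0 <= (h*t)^2) by apply pow2_ge_0.
  apply Rle_trans with (W * ((h * t) ^ 2 * exp (Rabs (h * t)))).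
  - apply Rmult_le_compat_l; lra.
  - replace (h ^ 2 * (t * (t * (W * exp (1 * t))))) with (W * ((h*t)^2 * exp (1 * t))) by ring.
    apply Rmult_le_compat_l; [lra|]. apply Rmult_le_compat_l; auto.
Qed.

Lemma M_diff_bound nu k s h : 0 < nu -> Rabs h <= 1 ->
  Rabs (M nu k (s + h) - M nu k s - h * M nu (S k) s) <= h ^ 2 * M nu (S (S k)) (s + 1).
Proof.
  intros Hn Hh.
  destruct (M_correct nu k (s+h) Hn) as [H1 _].
  destruct (M_correct nu k s Hn) as [H2 _].
  destruct (M_correct nu (S k) s Hn) as [H3 _].
  destruct (M_correct nu (S (S k)) (s+1) Hn) as [H4 _].
  assert (L := isg_lin3 _ _ _ _ _ _ 1 (-1) (-h) H1 H2 H3).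
  assert (S4 := isg_scal _ _ (h^2) H4).
  replace (M nu k (s + h) - M nu k s - h * M nu (S k) s) with
    (1 * M nu k (s + h) + -1 * M nu k s + - h * M nu (S k) s) by ring.
  refine (RInt_gen_norm _ _ _ _ _ _ L S4).
  - exists (fun a => a < 1) (fun b => 1 < b).
    + exists (mkposreal 1 Rlt_0_1). intros y Hy _. 
      unfold ball in Hy; simpl in Hy; unfold AbsRing_ball, abs, minus, plus, opp in Hy; simpl in Hy.
      apply Rabs_def2 in Hy. lra.
    + exists 1. auto.
    + intros a b Ha Hb. simpl. lra.
  - exists (fun a => 0 < a) (fun b => 0 < b).
    + exists (mkposreal 1 Rlt_0_1). intros y Hy Hy0. auto.
    + exists 0. auto.
    + intros a b Ha Hb x Hx. simpl in Hx. apply w_diff_bound; auto. lra.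
Qed.

Lemma M_deriv nu k s : 0 < nu -> is_derive (M nu k) s (M nu (S k) s).
Proof.
  intros Hn. apply is_derive_Reals. intros eps Heps.
  set (K := M nu (S (S k)) (s + 1)).
  assert (HK : 0 < K) by (apply M_pos; auto).
  assert (Hd : 0 < Rmin 1 (eps / (K + 1))).
  { apply Rmin_glb_lt; [lra|]. apply Rdiv_lt_0_compat; lra. }
  exists (mkposreal _ Hd). intros h Hh0 Hh. simpl in Hh.
  assert (Hh1 : Rabs h <= 1) by (left; apply Rlt_le_trans with (1 := Hh); apply Rmin_l).
  assert (Hh2 : Rabs h < eps / (K + 1)) by (apply Rlt_le_trans with (1 := Hh); apply Rmin_r).
  assert (B := M_diff_bound nu k s h Hn Hh1). fold K in B.
  assert (Hpos : 0 < Rabs h) by (apply Rabs_pos_lt; auto).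
  replace ((M nu k (s + h) - M nu k s) / h - M nu (S k) s)
     with ((M nu k (s + h) - M nu k s - h * M nu (S k) s) / h) by (field; auto).
  unfold Rdiv. rewrite Rabs_mult, Rabs_inv.
  apply Rle_lt_trans with (h ^ 2 * K * / Rabs h).
  { apply Rmult_le_compat_r; [left; apply Rinv_0_lt_compat; auto | auto]. }
  rewrite <- (pow2_abs h).
  replace (Rabs h ^ 2 * K * / Rabs h) with (Rabs h * K) by (field; lra).
  apply Rle_lt_trans with (eps / (K + 1) * K).
  { apply Rmult_le_compat_r; lra. }
  apply Rmult_lt_reg_r with (K + 1); [lra|].
  replace (eps / (K + 1) * K * (K + 1)) with (eps * K) by (field; lra). nra.
Qed.

Lemma RInt_lin3 (f1 f2 f3 : R -> R) a b a1 a2 a3 :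
  ex_RInt f1 a b -> ex_RInt f2 a b -> ex_RInt f3 a b ->
  RInt (fun t => a1 * f1 t + a2 * f2 t + a3 * f3 t) a b =
  a1 * RInt f1 a b + a2 * RInt f2 a b + a3 * RInt f3 a b.
Proof.
  intros H1 H2 H3. apply is_RInt_unique.
  apply (is_RInt_plus (V:=R_NormedModule)); [apply (is_RInt_plus (V:=R_NormedModule))|];
   apply (is_RInt_scal (V:=R_NormedModule)); apply (RInt_correct (V:=R_CompleteNormedModule)); auto.
Qed.

Lemma M_logconvex nu s : 0 < nu ->
  0 < M nu 2 s * M nu 0 s - M nu 1 s ^ 2.
Proof.
  intros Hn.
  assert (HM0 := M_pos nu 0 s Hn).
  set (lam := M nu 1 s / M nu 0 s).
  set (phi := fun t => 1 * w nu 2 s t + (-2 * lam) * w nu 1 s t + lam ^ 2 * w nu 0 s t).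
  assert (Hphi : forall t, 0 < t -> phi t = w nu 0 s t * (t - lam) ^ 2).
  { intros t Ht. unfold phi. rewrite (w_S nu 1 s t Ht), (w_S nu 0 s t Ht). ring. }
  destruct (M_correct nu 0 s Hn) as [I0 B0].
  destruct (M_correct nu 1 s Hn) as [I1 B1].
  destruct (M_correct nu 2 s Hn) as [I2 B2].
  assert (Hc : forall t, 0 < t -> continuous phi t).
  { intros t Ht. unfold phi.
    apply (continuous_plus (fun t => 1 * w nu 2 s t + -2 * lam * w nu 1 s t) (fun t => lam^2 * w nu 0 s t)).
    apply (continuous_plus (fun t => 1 * w nu 2 s t) (fun t => -2 * lam * w nu 1 s t)).
    all: apply (continuous_mult (fun _ => _) (w nu _ s)); [apply continuous_const | apply w_cont; auto]. }
  destruct (gen_exist phi (M nu 2 s + 2 * Rabs lam * M nu 1 s + lam ^ 2 * M nu 0 s)) as [L [HL1 HL2]].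
  - auto.
  - intros t Ht. rewrite Hphi by auto. apply Rmult_le_pos; [left; apply w_pos| apply pow2_ge_0].
  - intros a b Ha Hab. unfold phi.
    rewrite RInt_lin3 by (apply exRI_pos; auto; intros; apply w_cont; auto).
    assert (0 <= RInt (w nu 1 s) a b) by (apply RInt_ge_0; auto; [apply exRI_pos; auto; intros; apply w_cont; auto| intros; left; apply w_pos]).
    assert (RInt (w nu 0 s) a b <= M nu 0 s) by auto.
    assert (RInt (w nu 1 s) a b <= M nu 1 s) by auto.
    assert (RInt (w nu 2 s) a b <= M nu 2 s) by auto.
    assert (0 <= lam ^ 2) by apply pow2_ge_0.
    assert (-2 * lam * RInt (w nu 1 s) a b <= 2 * Rabs lam * M nu 1 s).
    { apply Rle_trans with (2 * Rabs lam * RInt (w nu 1 s) a b).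
      - assert (- lam <= Rabs lam) by (rewrite <- Rabs_Ropp; apply Rle_abs). nra.
      - assert (0 <= Rabs lam) by apply Rabs_pos. nra. }
    nra.
  - assert (Hl := isg_lin3 _ _ _ _ _ _ 1 (-2 * lam) (lam ^ 2) I2 I1 I0).
    fold phi in Hl.
    assert (E : L = 1 * M nu 2 s + -2 * lam * M nu 1 s + lam ^ 2 * M nu 0 s).
    { rewrite <- (is_RInt_gen_unique _ _ HL1). rewrite <- (is_RInt_gen_unique _ _ Hl). reflexivity. }
    assert (Hpos : 0 < L).
    { apply Rlt_le_trans with (RInt phi (Rabs lam + 1) (Rabs lam + 2)).
      2:{ apply HL2; [assert (0 <= Rabs lam) by apply Rabs_pos; lra | lra]. }
      assert (0 <= Rabs lam) by apply Rabs_pos.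
      apply RInt_gt_0; [lra | | intros; apply Hc; lra].
      intros t Ht. rewrite Hphi by lra. apply Rmult_lt_0_compat; [apply w_pos|].
      apply pow_lt. assert (lam <= Rabs lam) by apply Rle_abs. lra. }
    rewrite E in Hpos. unfold lam in Hpos.
    apply Rmult_lt_reg_r with (/ M nu 0 s). { apply Rinv_0_lt_compat; auto. }
    rewrite Rmult_0_l.
    replace ((M nu 2 s * M nu 0 s - M nu 1 s ^ 2) * / M nu 0 s) with
      (1 * M nu 2 s + -2 * (M nu 1 s / M nu 0 s) * M nu 1 s + (M nu 1 s / M nu 0 s) ^ 2 * M nu 0 s)
      by (field; lra).
    auto.
Qed.

Definition Lx (a b sigma : R) (x : R) := ((b * x - a) / (sigma * b)) * sqrt (2 * b).
Definition bet (b sigma : R) := sqrt (2 * b) / sigma.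
Definition q (a b sigma rho : R) (k : nat) (x : R) :=
  bet b sigma ^ k * M (rho / b) k (Lx a b sigma x).

Lemma psi_eq a b sigma rho : 0 < b -> 0 < sigma ->
  psi a b sigma rho = fun x => / Gamma (- (- rho / b)) * q a b sigma rho 0 x.
Proof.
  intros Hb Hs. apply functional_extensionality. intros x.
  unfold psi, Dpc, q, M. rewrite pow_O.
  set (I1 := RInt_gen _ _ _).
  set (I2 := RInt_gen _ _ _).
  assert (E : I1 = I2).
  { unfold I1, I2. f_equal. apply functional_extensionality. intros t. unfold w, Lx. simpl INR.
    f_equal; f_equal; field; lra. }
  rewrite E.
  set (y := - ((b * x - a) / (sigma * b)) * sqrt (2 * b)).
  assert (Hy : y ^ 2 = ((b * x - a) / (sigma * b)) ^ 2 * 2 * b).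
  { unfold y. replace ((- ((b * x - a) / (sigma * b)) * sqrt (2 * b)) ^ 2) with
      (((b * x - a) / (sigma * b)) ^ 2 * sqrt (2 * b) ^ 2) by ring.
    rewrite pow2_sqrt by lra. ring. }
  assert (Hexp : exp ((b * x - a) ^ 2 / (2 * sigma ^ 2 * b)) * exp (- y ^ 2 / 4) = 1).
  { rewrite <- exp_plus, <- exp_0. f_equal. rewrite Hy. field. lra. }
  assert (G : forall (I g : R), exp ((b * x - a) ^ 2 / (2 * sigma ^ 2 * b)) * (exp (- y ^ 2 / 4) / g * I)
     = / g * (1 * I)).
  { intros I g. rewrite <- Hexp. unfold Rdiv. ring. }
  apply G.
Qed.

Lemma q_deriv a b sigma rho k x : 0 < b -> 0 < sigma -> 0 < rho ->
  is_derive (q a b sigma rho k) x (q a b sigma rho (S k) x).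
Proof.
  intros Hb Hs Hr. unfold q.
  assert (Hn : 0 < rho / b) by (apply Rdiv_lt_0_compat; auto).
  assert (HL : is_derive (Lx a b sigma) x (bet b sigma)).
  { unfold Lx, bet. auto_derive. auto. field. lra. }
  assert (H := is_derive_comp (K:=R_AbsRing) (V:=R_NormedModule) (M (rho / b) k) (Lx a b sigma) x _ _
      (M_deriv (rho/b) k (Lx a b sigma x) Hn) HL).
  assert (H2 := is_derive_scal _ _ (bet b sigma ^ k) _ H).
  simpl pow. replace (bet b sigma * bet b sigma ^ k * M (rho / b) (S k) (Lx a b sigma x))
    with (bet b sigma ^ k * scal (bet b sigma) (M (rho / b) (S k) (Lx a b sigma x))).
  exact H2. change scal with Rmult. simpl. ring.
Qed.

Lemma Dn_psi a b sigma rho n x : 0 < b -> 0 < sigma -> 0 < rho ->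
  Derive_n (psi a b sigma rho) n x = / Gamma (- (- rho / b)) * q a b sigma rho n x.
Proof.
  intros Hb Hs Hr. revert x. induction n as [|n IH]; intros x.
  - simpl. rewrite psi_eq by auto. reflexivity.
  - simpl. rewrite (Derive_ext _ (fun y => / Gamma (- (- rho / b)) * q a b sigma rho n y)) by auto.
    apply is_derive_unique. apply is_derive_scal. apply q_deriv; auto.
Qed.

Lemma q_pos a b sigma rho k x : 0 < b -> 0 < sigma -> 0 < rho -> 0 < q a b sigma rho k x.
Proof.
  intros Hb Hs Hr. unfold q. apply Rmult_lt_0_compat.
  - apply pow_lt. unfold bet. apply Rdiv_lt_0_compat; auto. apply sqrt_lt_R0. lra.
  - apply M_pos. apply Rdiv_lt_0_compat; auto.
Qed.

Lemma q_logconvex a b sigma rho x : 0 < b -> 0 < sigma -> 0 < rho ->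
  0 < q a b sigma rho 2 x * q a b sigma rho 0 x - q a b sigma rho 1 x ^ 2.
Proof.
  intros Hb Hs Hr. unfold q.
  assert (Hbt : 0 < bet b sigma) by (unfold bet; apply Rdiv_lt_0_compat; auto; apply sqrt_lt_R0; lra).
  assert (H := M_logconvex (rho / b) (Lx a b sigma x) ltac:(apply Rdiv_lt_0_compat; auto)).
  replace (bet b sigma ^ 2 * M (rho / b) 2 (Lx a b sigma x) * (bet b sigma ^ 0 * M (rho / b) 0 (Lx a b sigma x)) -
   (bet b sigma ^ 1 * M (rho / b) 1 (Lx a b sigma x)) ^ 2) with
   (bet b sigma ^ 2 * (M (rho / b) 2 (Lx a b sigma x) * M (rho / b) 0 (Lx a b sigma x) - M (rho / b) 1 (Lx a b sigma x) ^ 2)) by ring.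
  apply Rmult_lt_0_compat; auto. apply pow_lt; auto.
Qed.

Fixpoint Cn (lo : R) (n : nat) (f : R -> R) : Prop :=
  match n with
  | O => forall x, lo < x -> continuous f x
  | S m => (forall x, lo < x -> ex_derive f x) /\ Cn lo m (Derive f)
  end.

Lemma loc_U lo x : lo < x -> locally x (fun y => lo < y).
Proof.
  intros H. assert (Hp : 0 < x - lo) by lra. exists (mkposreal _ Hp).
  intros y Hy. unfold ball in Hy; simpl in Hy; unfold AbsRing_ball, abs, minus, plus, opp in Hy; simpl in Hy.
  apply Rabs_def2 in Hy. lra.
Qed.

Lemma loc_eq lo (f g : R -> R) x : lo < x -> (forall y, lo < y -> f y = g y) ->
  locally x (fun y => f y = g y).
Proof.
  intros H Hfg. destruct (loc_U lo x H) as [e He]. exists e. intros y Hy. apply Hfg, He, Hy.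
Qed.

Lemma exd_ext_loc (f g : R -> R) x : locally x (fun y => f y = g y) -> ex_derive f x -> ex_derive g x.
Proof. intros H1 H2. exact (ex_derive_ext_loc (K:=R_AbsRing) (V:=R_NormedModule) f g x H1 H2). Qed.

Lemma cont_ext_loc (f g : R -> R) x : locally x (fun y => f y = g y) -> continuous f x -> continuous g x.
Proof.
  intros H1 H2. apply (continuous_ext_loc (T:=R_UniformSpace) (U:=R_UniformSpace) g f x); auto.
Qed.

Lemma Cn_ext lo n : forall f g, Cn lo n f -> (forall x, lo < x -> f x = g x) -> Cn lo n g.
Proof.
  induction n as [|n IH]; intros f g Hf Hfg; simpl in *.
  - intros x Hx. apply cont_ext_loc with f; auto. apply loc_eq with lo; auto.
  - destruct Hf as [Hd Hn]. split.
    + intros x Hx. apply exd_ext_loc with f; auto. apply loc_eq with lo; auto.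
    + apply IH with (Derive f); auto. intros x Hx. apply Derive_ext_loc. apply loc_eq with lo; auto.
Qed.

Lemma Cn_down lo n : forall f, Cn lo (S n) f -> Cn lo n f.
Proof.
  induction n as [|n IH]; intros f Hf.
  - simpl in *. destruct Hf as [Hd _]. intros x Hx. apply exd_cont. auto.
  - destruct Hf as [Hd Hn]. split; auto.
Qed.

Lemma Cn_const lo n a : Cn lo n (fun _ => a).
Proof.
  revert a. induction n as [|n IH]; intros a; simpl.
  - intros; apply continuous_const.
  - split. + intros; apply (ex_derive_const (K:=R_AbsRing) (V:=R_NormedModule)).
    + apply Cn_ext with (fun _ => 0); auto. intros x _. rewrite Derive_const. auto.
Qed.

Lemma Cn_id lo n : Cn lo n (fun x => x).
Proof.
  destruct n as [|n]; simpl.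
  - intros; apply continuous_id.
  - split. + intros; apply (ex_derive_id (K:=R_AbsRing)).
    + apply Cn_ext with (fun _ => 1). apply Cn_const. intros x _. symmetry. apply (Derive_id x).
Qed.

Lemma Cn_plus lo n : forall f g, Cn lo n f -> Cn lo n g -> Cn lo n (fun x => f x + g x).
Proof.
  induction n as [|n IH]; intros f g Hf Hg; simpl in *.
  - intros x Hx. apply (continuous_plus f g); auto.
  - destruct Hf as [Hf1 Hf2]; destruct Hg as [Hg1 Hg2]. split.
    + intros x Hx. apply (ex_derive_plus (K:=R_AbsRing) (V:=R_NormedModule)); auto.
    + apply Cn_ext with (fun x => Derive f x + Derive g x); auto.
      intros x Hx. rewrite Derive_plus; auto.
Qed.

Lemma Cn_mult lo n : forall f g, Cn lo n f -> Cn lo n g -> Cn lo n (fun x => f x * g x).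
Proof.
  induction n as [|n IH]; intros f g Hf Hg.
  - simpl in *. intros x Hx. apply (continuous_mult f g); auto.
  - assert (Hf' := Cn_down lo n f Hf). assert (Hg' := Cn_down lo n g Hg).
    simpl in Hf, Hg. destruct Hf as [Hf1 Hf2]; destruct Hg as [Hg1 Hg2]. split.
    + intros x Hx. apply ex_derive_mult; auto.
    + apply Cn_ext with (fun x => Derive f x * g x + f x * Derive g x).
      * apply Cn_plus; apply IH; auto.
      * intros x Hx. rewrite Derive_mult; auto.
Qed.

Lemma Cn_inv lo n : forall f, Cn lo n f -> (forall x, lo < x -> f x <> 0) -> Cn lo n (fun x => / f x).
Proof.
  induction n as [|n IH]; intros f Hf Hnz.
  - simpl in *. intros x Hx. apply continuous_comp; auto.
    apply exd_cont. apply ex_derive_Reals_1. apply derivable_pt_inv; auto.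
    apply derivable_pt_id.
  - assert (Hf' := Cn_down lo n f Hf).
    simpl in Hf. destruct Hf as [Hf1 Hf2]. split.
    + intros x Hx. apply ex_derive_inv; auto.
    + apply Cn_ext with (fun x => (-1) * Derive f x * (/ f x * / f x)).
      * apply Cn_mult; [apply Cn_mult; [apply Cn_const | auto] | apply Cn_mult; apply IH; auto].
      * intros x Hx. rewrite Derive_inv; auto. specialize (Hnz x Hx). field. auto.
Qed.

Lemma Cn_family lo (f : nat -> R -> R) :
  (forall k x, lo < x -> is_derive (f k) x (f (S k) x)) -> forall n k, Cn lo n (f k).
Proof.
  intros Hd n. induction n as [|n IH]; intros k; simpl.
  - intros x Hx. apply exd_cont. eexists. apply Hd; auto.
  - split. + intros x Hx. eexists. apply Hd; auto.
    + apply Cn_ext with (f (S k)); auto. intros x Hx. symmetry. apply is_derive_unique. auto.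
Qed.

Lemma Cn_exdn lo n : forall f, Cn lo (S n) f -> forall x, lo < x -> ex_derive_n f (S n) x.
Proof.
  induction n as [|n IH]; intros f Hf x Hx.
  - simpl. destruct Hf as [H _]. auto.
  - destruct Hf as [Hf1 Hf2]. specialize (IH (Derive f) Hf2 x Hx).
    simpl in IH |- *.
    apply ex_derive_ext with (2 := IH). intros t.
    change (Derive_n (Derive_n f 1) n t = Derive_n f (S n) t).
    rewrite Derive_n_comp. f_equal. lia.
Qed.

Record QH (Q : nat -> R -> R) : Prop := {
  QH_d : forall k z, is_derive (Q k) z (Q (S k) z);
  QH_pos : forall k z, 0 < Q k z;
  QH_lc : forall z, 0 < Q 2%nat z * Q 0%nat z - Q 1%nat z ^ 2 }.

Definition gf (Q : nat -> R -> R) c z := (z - c) * Q 1%nat z - Q 0%nat z.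
Definition hf (Q : nat -> R -> R) c z := (z - c) * Q 2%nat z - Q 1%nat z.
Definition Wf (Q : nat -> R -> R) z := Q 2%nat z * Q 0%nat z - Q 1%nat z ^ 2.
Definition Nf (Q : nat -> R -> R) c z := - ((Q 3%nat z * gf Q c z - Q 2%nat z * hf Q c z) * Q 0%nat z).
Definition Tf (Q : nat -> R -> R) c al z := Nf Q c z / (al * Wf Q z * hf Q c z).

Lemma isd_lin (f : R -> R) x df c : is_derive f x df ->
  is_derive (fun z => (z - c) * f z) x (f x + (x - c) * df).
Proof.
  intros H.
  assert (H1 : is_derive (fun z => z - c) x 1) by (auto_derive; auto; ring).
  pose proof (is_derive_mult (K:=R_AbsRing) _ _ x _ _ H1 H Rmult_comm) as H2.
  replace (f x + (x - c) * df) with (plus (mult 1 (f x)) (mult (x - c) df)).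
  exact H2. unfold plus, mult; simpl; ring.
Qed.

Lemma isd_sub (f g : R -> R) x df dg : is_derive f x df -> is_derive g x dg ->
  is_derive (fun z => f z - g z) x (df - dg).
Proof. intros H1 H2. exact (is_derive_minus (K:=R_AbsRing) (V:=R_NormedModule) f g x df dg H1 H2). Qed.

Lemma gf_d Q c z : QH Q -> is_derive (gf Q c) z ((z - c) * Q 2%nat z).
Proof.
  intros HQ. unfold gf.
  replace ((z - c) * Q 2%nat z) with ((Q 1%nat z + (z - c) * Q 2%nat z) - Q 1%nat z) by ring.
  apply isd_sub; [apply isd_lin|]; apply (QH_d Q HQ).
Qed.

Lemma hf_d Q c z : QH Q -> is_derive (hf Q c) z ((z - c) * Q 3%nat z).
Proof.
  intros HQ. unfold hf.
  replace ((z - c) * Q 3%nat z) with ((Q 2%nat z + (z - c) * Q 3%nat z) - Q 2%nat z) by ring.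
  apply isd_sub; [apply isd_lin|]; apply (QH_d Q HQ).
Qed.

Lemma incr_lemma (f f' : R -> R) c u v :
  (forall z, is_derive f z (f' z)) -> (forall z, c < z -> 0 < f' z) ->
  c <= u -> u < v -> f u < f v.
Proof.
  intros Hd Hp Hu Huv.
  destruct (MVT_cor2 f f' u v Huv) as [z [Hz1 Hz2]].
  { intros z _. apply is_derive_Reals. auto. }
  assert (0 < f' z) by (apply Hp; lra).
  assert (0 < f' z * (v - u)) by (apply Rmult_lt_0_compat; lra). lra.
Qed.

Lemma gf_incr Q c u v : QH Q -> c <= u -> u < v -> gf Q c u < gf Q c v.
Proof.
  intros HQ. apply incr_lemma with (f' := fun z => (z - c) * Q 2%nat z).
  - intros; apply gf_d; auto.
  - intros z Hz. apply Rmult_lt_0_compat; [lra| apply (QH_pos Q HQ)].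
Qed.

Lemma hf_incr Q c u v : QH Q -> c <= u -> u < v -> hf Q c u < hf Q c v.
Proof.
  intros HQ. apply incr_lemma with (f' := fun z => (z - c) * Q 3%nat z).
  - intros; apply hf_d; auto.
  - intros z Hz. apply Rmult_lt_0_compat; [lra| apply (QH_pos Q HQ)].
Qed.

Lemma gf_xinf_neg Q c xinf : QH Q -> hf Q c xinf = 0 -> gf Q c xinf < 0.
Proof.
  intros HQ Hh. unfold hf, gf in *.
  assert (H2 := QH_pos Q HQ 2%nat xinf). assert (Hl := QH_lc Q HQ xinf).
  apply Rmult_lt_reg_r with (Q 2%nat xinf); auto. rewrite Rmult_0_l.
  replace (((xinf - c) * Q 1%nat xinf - Q 0%nat xinf) * Q 2%nat xinf) with
    (((xinf - c) * Q 2%nat xinf) * Q 1%nat xinf - Q 2%nat xinf * Q 0%nat xinf) by ring.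
  replace ((xinf - c) * Q 2%nat xinf) with (Q 1%nat xinf) by lra. lra.
Qed.

Lemma xinf_lt_x0 Q c xinf x0 : QH Q -> c < x0 -> c < xinf -> hf Q c xinf = 0 -> gf Q c x0 = 0 -> xinf < x0.
Proof.
  intros HQ H1 H2 Hh Hg. destruct (Rlt_or_le xinf x0) as [H|H]; auto.
  exfalso. assert (Hn := gf_xinf_neg Q c xinf HQ Hh).
  destruct H as [H|H].
  - assert (gf Q c x0 < gf Q c xinf) by (apply gf_incr; auto; lra). lra.
  - subst. lra.
Qed.

Lemma hf_pos Q c xinf z : QH Q -> c < xinf -> hf Q c xinf = 0 -> xinf < z -> 0 < hf Q c z.
Proof. intros HQ H1 Hh Hz. rewrite <- Hh. apply hf_incr; auto; lra. Qed.

Lemma gf_neg Q c x0 z : QH Q -> gf Q c x0 = 0 -> c <= z -> z < x0 -> gf Q c z < 0.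
Proof. intros HQ Hg H1 H2. rewrite <- Hg. apply gf_incr; auto. Qed.

Lemma Nf_pos Q c x0 xinf z : QH Q -> c < xinf -> hf Q c xinf = 0 -> gf Q c x0 = 0 ->
  xinf <= z -> z < x0 -> 0 < Nf Q c z.
Proof.
  intros HQ Hc Hh Hg H1 H2. unfold Nf.
  assert (Hgz : gf Q c z < 0) by (apply gf_neg with x0; auto; lra).
  assert (Hhz : 0 <= hf Q c z).
  { destruct H1 as [H1|H1]. left; apply hf_pos with xinf; auto. subst; lra. }
  assert (H3 := QH_pos Q HQ 3%nat z). assert (H2' := QH_pos Q HQ 2%nat z). assert (H0 := QH_pos Q HQ 0%nat z).
  assert (Q 3%nat z * gf Q c z - Q 2%nat z * hf Q c z < 0) by nra.
  nra.
Qed.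

Lemma Tf_pos Q c al x0 xinf z : QH Q -> 0 < al -> c < xinf -> hf Q c xinf = 0 -> gf Q c x0 = 0 ->
  xinf < z -> z < x0 -> 0 < Tf Q c al z.
Proof.
  intros HQ Ha Hc Hh Hg H1 H2. unfold Tf.
  apply Rdiv_lt_0_compat. apply Nf_pos with x0 xinf; auto; lra.
  apply Rmult_lt_0_compat. apply Rmult_lt_0_compat; auto. apply (QH_lc Q HQ).
  apply hf_pos with xinf; auto.
Qed.

Lemma Cn_Q lo Q n k : QH Q -> Cn lo n (Q k).
Proof. intros HQ. apply Cn_family. intros; apply (QH_d Q HQ). Qed.

Lemma Cn_minus lo n f g : Cn lo n f -> Cn lo n g -> Cn lo n (fun x => f x - g x).
Proof.
  intros Hf Hg. apply Cn_ext with (fun x => f x + (-1) * g x).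
  apply Cn_plus; auto. apply Cn_mult; auto. apply Cn_const.
  intros; ring.
Qed.

Lemma Cn_lin lo n c f : Cn lo n f -> Cn lo n (fun z => (z - c) * f z).
Proof. intros Hf. apply Cn_mult; auto. apply Cn_minus. apply Cn_id. apply Cn_const. Qed.

Lemma Cn_Tf lo Q c al n : QH Q -> 0 < al -> (forall z, lo < z -> 0 < hf Q c z) -> Cn lo n (Tf Q c al).
Proof.
  intros HQ Ha Hh. unfold Tf.
  apply Cn_ext with (fun z => Nf Q c z * / (al * Wf Q z * hf Q c z)).
  2:{ intros; unfold Rdiv; auto. }
  apply Cn_mult.
  - unfold Nf. apply Cn_ext with (fun z => (-1) * ((Q 3%nat z * gf Q c z - Q 2%nat z * hf Q c z) * Q 0%nat z)).
    2:{ intros; ring. }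
    apply Cn_mult. apply Cn_const. apply Cn_mult; [|apply Cn_Q; auto].
    apply Cn_minus; apply Cn_mult; try (apply Cn_Q; auto).
    + unfold gf. apply Cn_minus; [apply Cn_lin|]; apply Cn_Q; auto.
    + unfold hf. apply Cn_minus; [apply Cn_lin|]; apply Cn_Q; auto.
  - apply Cn_inv.
    + apply Cn_mult; [apply Cn_mult|].
      * apply Cn_const.
      * unfold Wf. apply Cn_minus. apply Cn_mult; apply Cn_Q; auto.
        apply Cn_ext with (fun z => Q 1%nat z * Q 1%nat z). apply Cn_mult; apply Cn_Q; auto.
        intros; ring.
      * unfold hf. apply Cn_minus; [apply Cn_lin|]; apply Cn_Q; auto.
    + intros x Hx. apply Rgt_not_eq. apply Rmult_lt_0_compat. apply Rmult_lt_0_compat; auto.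
      apply (QH_lc Q HQ). auto.
Qed.

Lemma cont_eps (f : R -> R) x : continuous f x -> forall eps, 0 < eps ->
  exists d, 0 < d /\ forall y, Rabs (y - x) < d -> Rabs (f y - f x) < eps.
Proof.
  intros Hc eps He.
  assert (H := proj1 (filterlim_locally (F := locally x) f (f x)) Hc (mkposreal eps He)).
  destruct H as [d Hd]. exists d. split; [apply cond_pos|].
  intros y Hy. apply (Hd y). exact Hy.
Qed.

Lemma Cn_hf lo Q c n : QH Q -> Cn lo n (hf Q c).
Proof. intros HQ. unfold hf. apply Cn_minus; [apply Cn_lin|]; apply Cn_Q; auto. Qed.

Lemma Cn_Wf lo Q n : QH Q -> Cn lo n (Wf Q).
Proof.
  intros HQ. unfold Wf. apply Cn_minus. apply Cn_mult; apply Cn_Q; auto.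
  apply Cn_ext with (fun z => Q 1%nat z * Q 1%nat z). apply Cn_mult; apply Cn_Q; auto.
  intros; ring.
Qed.

Lemma Cn_Nf lo Q c n : QH Q -> Cn lo n (Nf Q c).
Proof.
  intros HQ. unfold Nf. apply Cn_ext with (fun z => (-1) * ((Q 3%nat z * gf Q c z - Q 2%nat z * hf Q c z) * Q 0%nat z)).
  2:{ intros; ring. }
  apply Cn_mult. apply Cn_const. apply Cn_mult; [|apply Cn_Q; auto].
  apply Cn_minus; apply Cn_mult; try (apply Cn_Q; auto).
  + unfold gf. apply Cn_minus; [apply Cn_lin|]; apply Cn_Q; auto.
  + apply Cn_hf; auto.
Qed.

Lemma cont_of lo n f x : Cn lo n f -> lo < x -> continuous f x.
Proof.
  revert f. induction n as [|n IH]; intros f Hf Hx; simpl in Hf; auto.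
  apply IH; auto. apply Cn_down; auto.
Qed.



Lemma main_abstract (Q : nat -> R -> R) c al x0 xinf (Th : R -> R) :
  QH Q -> 0 < al -> c < x0 -> c < xinf -> hf Q c xinf = 0 -> gf Q c x0 = 0 ->
  (forall z, xinf < z -> Th z = Tf Q c al z) ->
  let F := fun x => RInt Th x x0 in
  (forall x y, xinf < x -> x < y -> y < x0 -> F y < F x) /\
  (forall (n : nat) (x : R), xinf < x <= x0 -> ex_derive_n F n x) /\
  filterlim F (at_right xinf) (Rbar_locally p_infty) /\
  filterlim (Derive F) (at_right xinf) (Rbar_locally m_infty).
Proof.
  intros HQ Hal Hcx0 Hcxi Hh Hg HTh F.
  assert (Hlt : xinf < x0) by (apply xinf_lt_x0 with Q c; auto).
  assert (HhU : forall z, xinf < z -> 0 < hf Q c z) by (intros; apply hf_pos with xinf; auto).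
  assert (CTh : forall n, Cn xinf n Th).
  { intros n. apply Cn_ext with (Tf Q c al). apply Cn_Tf; auto. intros; symmetry; auto. }
  assert (Hcont : forall z, xinf < z -> continuous Th z) by (intros; apply (CTh 0%nat); auto).
  assert (Hex : forall u v, xinf < u -> xinf < v -> ex_RInt Th u v).
  { intros u v Hu Hv. apply (ex_RInt_continuous (V:=R_CompleteNormedModule)). intros z Hz.
    apply Hcont. assert (Rmin u v <= z) by lra. unfold Rmin in *. destruct (Rle_dec u v); lra. }
  assert (Hder : forall x, xinf < x -> is_derive F x (- Th x)).
  { intros x Hx. unfold F.
    apply (is_derive_RInt' (V:=R_NormedModule) Th (fun u => RInt Th u x0) x x0).
    - destruct (loc_U xinf x Hx) as [e He]. exists e. intros y Hy.
      apply (RInt_correct (V:=R_CompleteNormedModule)). apply Hex; auto.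
    - auto. }
  assert (HDF : forall x, xinf < x -> Derive F x = - Th x) by (intros; apply is_derive_unique; auto).
  assert (HF : forall x y, xinf < x -> xinf < y -> F x = RInt Th x y + F y).
  { intros x y Hx Hy. unfold F.
    assert (E := RInt_Chasles (V:=R_CompleteNormedModule) Th x y x0 (Hex x y Hx Hy) (Hex y x0 Hy Hlt)).
    rewrite <- E. reflexivity. }
  assert (LB : exists d K, 0 < d /\ d <= x0 - xinf /\ 0 < K /\
             forall z, xinf < z < xinf + d -> K / (z - xinf) <= Th z).
  { set (N0 := Nf Q c xinf). set (W0 := Wf Q xinf). set (dd := (xinf - c) * Q 3%nat xinf).
    assert (HN0 : 0 < N0) by (apply Nf_pos with x0 xinf; auto; lra).
    assert (HW0 : 0 < W0) by apply (QH_lc Q HQ).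
    assert (Hdd : 0 < dd) by (apply Rmult_lt_0_compat; [lra | apply (QH_pos Q HQ)]).
    destruct (cont_eps (Nf Q c) xinf (cont_of (xinf - 1) 0 _ xinf (Cn_Nf _ Q c 0 HQ) ltac:(lra)) (N0/2) ltac:(lra))
      as [d1 [Hd1 HN]].
    destruct (cont_eps (Wf Q) xinf (cont_of (xinf - 1) 0 _ xinf (Cn_Wf _ Q 0 HQ) ltac:(lra)) 1 ltac:(lra))
      as [d2 [Hd2 HW]].
    destruct (proj1 (is_derive_Reals _ _ _) (hf_d Q c xinf HQ) dd Hdd) as [d3 Hd3].
    fold dd in Hd3.
    set (d := Rmin (Rmin d1 d2) (Rmin d3 (x0 - xinf))).
    assert (Hd : 0 < d).
    { unfold d. apply Rmin_glb_lt; apply Rmin_glb_lt; try lra. apply cond_pos. }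
    assert (Hdle1 : d <= d1) by (unfold d; eapply Rle_trans; [apply Rmin_l| apply Rmin_l]).
    assert (Hdle2 : d <= d2) by (unfold d; eapply Rle_trans; [apply Rmin_l| apply Rmin_r]).
    assert (Hdle3 : d <= d3) by (unfold d; eapply Rle_trans; [apply Rmin_r| apply Rmin_l]).
    assert (Hdle4 : d <= x0 - xinf) by (unfold d; eapply Rle_trans; [apply Rmin_r| apply Rmin_r]).
    exists d, (N0 / (4 * al * (W0 + 1) * dd)). repeat split; auto.
    { apply Rdiv_lt_0_compat; auto. assert (0 < 4 * al * (W0 + 1)) by (apply Rmult_lt_0_compat; lra). apply Rmult_lt_0_compat; lra. }
    intros z Hz. rewrite HTh by lra. unfold Tf.
    assert (Hz1 : Rabs (z - xinf) < d) by (rewrite Rabs_pos_eq; lra).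
    specialize (HN z ltac:(lra)). specialize (HW z ltac:(lra)).
    apply Rabs_def2 in HN. apply Rabs_def2 in HW. change (Wf Q xinf) with W0 in HW. change (Nf Q c xinf) with N0 in HN.
    set (u := z - xinf).
    assert (Hu : 0 < u) by (unfold u; lra).
    assert (Hud : u < d) by (unfold u; lra).
    assert (Hu3 : Rabs u < d3) by (rewrite Rabs_pos_eq by lra; lra).
    specialize (Hd3 u ltac:(apply Rgt_not_eq; lra) Hu3).
    replace (xinf + u) with z in Hd3 by (unfold u; ring). rewrite Hh in Hd3.
    apply Rabs_def2 in Hd3. destruct Hd3 as [Hd3 _].
    assert (Hhz : hf Q c z < 2 * dd * u).
    { assert (hf Q c z / u < 2 * dd) by lra.
      apply Rmult_lt_reg_r with (/ u). apply Rinv_0_lt_compat; auto.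
      replace (2 * dd * u * / u) with (2 * dd) by (field; lra). unfold Rdiv in H. lra. }
    assert (Hhz0 : 0 < hf Q c z) by (apply HhU; lra).
    assert (HWz : 0 < Wf Q z) by apply (QH_lc Q HQ).
    assert (Hden : 0 < al * Wf Q z * hf Q c z) by (repeat apply Rmult_lt_0_compat; auto).
    assert (Hden2 : al * Wf Q z * hf Q c z <= al * (W0 + 1) * (2 * dd * u)).
    { apply Rmult_le_compat; try lra. left; apply Rmult_lt_0_compat; auto.
      apply Rmult_le_compat_l; lra. }
    replace (N0 / (4 * al * (W0 + 1) * dd) / u) with ((N0 / 2) / (al * (W0 + 1) * (2 * dd * u)))
      by (field; repeat split; lra).
    unfold Rdiv. apply Rmult_le_compat; try lra.
    + left; apply Rinv_0_lt_compat. assert (0 < al * (W0 + 1)) by (apply Rmult_lt_0_compat; lra).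
      apply Rmult_lt_0_compat; [lra|]. apply Rmult_lt_0_compat; lra.
    + apply Rinv_le_contravar; auto. }
  destruct LB as [d [K [Hd [Hdx [HK HLB]]]]].
  split; [|split; [|split]].
  -
    intros x y Hx Hxy Hy. rewrite (HF x y) by lra.
    assert (0 < RInt Th x y); [|lra].
    apply RInt_gt_0; auto.
    + intros z Hz. rewrite HTh by lra. apply Tf_pos with x0 xinf; auto; lra.
    + intros z Hz. apply Hcont. lra.
  -
    intros n x [Hx1 Hx2]. destruct n as [|n]; [simpl; auto|].
    apply (Cn_exdn xinf n F); auto. simpl. split.
    + intros; eexists; apply Hder; auto.
    + apply Cn_ext with (fun x => (-1) * Th x). apply Cn_mult; auto. apply Cn_const.
      intros; rewrite HDF; auto; ring.
  -
    set (e := xinf + d / 2).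
    assert (He1 : xinf < e) by (unfold e; lra). assert (He2 : e < x0) by (unfold e; lra).
    assert (Hlow : forall x, xinf < x < e -> F e + K * ln (e - xinf) - K * ln (x - xinf) <= F x).
    { intros x Hx. rewrite (HF x e) by lra.
      assert (RInt (fun z => K / (z - xinf)) x e = K * ln (e - xinf) - K * ln (x - xinf)).
      { apply is_RInt_unique.
        assert (H := is_RInt_derive (V:=R_CompleteNormedModule) (fun z => K * ln (z - xinf)) (fun z => K / (z - xinf)) x e).
        rewrite Rmin_left, Rmax_right in H by lra. apply H.
        - intros z Hz. auto_derive. lra. field. lra.
        - intros z Hz. apply exd_cont. auto_derive. lra. }
      assert (RInt (fun z => K / (z - xinf)) x e <= RInt Th x e).
      { apply RInt_le; try lra.
        - apply (ex_RInt_continuous (V:=R_CompleteNormedModule)). intros z Hz.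
          rewrite Rmin_left, Rmax_right in Hz by lra. apply exd_cont. auto_derive. lra.
        - apply Hex; lra.
        - intros z Hz. apply HLB. unfold e in Hz. lra. }
      lra. }
    intros P [Mb HP].
    set (Aa := (F e + K * ln (e - xinf) - Mb) / K).
    assert (Hr : 0 < Rmin (d / 2) (exp Aa)) by (apply Rmin_glb_lt; [lra | apply exp_pos]).
    exists (mkposreal _ Hr). intros x Hxb Hx. simpl in Hxb.
    unfold ball in Hxb; simpl in Hxb; unfold AbsRing_ball, abs, minus, plus, opp in Hxb; simpl in Hxb.
    apply Rabs_def2 in Hxb. destruct Hxb as [Hxb _].
    assert (Hx1 : x - xinf < d / 2) by (apply Rlt_le_trans with (1 := Hxb); apply Rmin_l).
    assert (Hx2 : x - xinf < exp Aa) by (apply Rlt_le_trans with (1 := Hxb); apply Rmin_r).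
    apply HP.
    assert (Hln : ln (x - xinf) < Aa).
    { rewrite <- (ln_exp Aa). apply ln_increasing; lra. }
    assert (K * ln (x - xinf) < K * Aa) by (apply Rmult_lt_compat_l; auto).
    replace (K * Aa) with (F e + K * ln (e - xinf) - Mb) in H by (unfold Aa; field; lra).
    assert (F e + K * ln (e - xinf) - K * ln (x - xinf) <= F x) by (apply Hlow; unfold e; lra).
    lra.
  -
    intros P [Mb HP].
    assert (Hr : 0 < Rmin d (K / (Rabs Mb + 1))).
    { apply Rmin_glb_lt; auto. apply Rdiv_lt_0_compat; auto. pose proof (Rabs_pos Mb); lra. }
    exists (mkposreal _ Hr). intros x Hxb Hx. simpl in Hxb.
    unfold ball in Hxb; simpl in Hxb; unfold AbsRing_ball, abs, minus, plus, opp in Hxb; simpl in Hxb.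
    apply Rabs_def2 in Hxb. destruct Hxb as [Hxb _].
    assert (Hx1 : x - xinf < d) by (apply Rlt_le_trans with (1 := Hxb); apply Rmin_l).
    assert (Hx2 : x - xinf < K / (Rabs Mb + 1)) by (apply Rlt_le_trans with (1 := Hxb); apply Rmin_r).
    apply HP. rewrite HDF by auto.
    assert (H1 : K / (x - xinf) <= Th x) by (apply HLB; lra).
    assert (Hpm : 0 < Rabs Mb + 1) by (pose proof (Rabs_pos Mb); lra).
    assert (H2 : Rabs Mb + 1 < K / (x - xinf)).
    { apply Rmult_lt_reg_r with (x - xinf). lra.
      replace (K / (x - xinf) * (x - xinf)) with K by (field; lra).
      apply Rmult_lt_reg_r with (/ (Rabs Mb + 1)). apply Rinv_0_lt_compat; auto.
      replace ((Rabs Mb + 1) * (x - xinf) * / (Rabs Mb + 1)) with (x - xinf) by (field; lra).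
      exact Hx2. }
    assert (- Mb <= Rabs Mb) by (rewrite <- Rabs_Ropp; apply Rle_abs). lra.
Qed.

Lemma theta_alg (C al z c p0 p1 p2 p3 : R) : C <> 0 ->
  ((C * p3 * ((z - c) * (C * p1) - C * p0) - C * p2 * ((z - c) * (C * p2) - C * p1)) * (C * p0)) /
  (- al * (C * p2 * (C * p0) - (C * p1) ^ 2) * ((z - c) * (C * p2) - C * p1))
  = - ((p3 * ((z - c) * p1 - p0) - p2 * ((z - c) * p2 - p1)) * p0) /
    (al * (p2 * p0 - p1 ^ 2) * ((z - c) * p2 - p1)).
Proof.
  intros HC. unfold Rdiv.
  set (X := (p3 * ((z - c) * p1 - p0) - p2 * ((z - c) * p2 - p1)) * p0).
  set (Y := al * (p2 * p0 - p1 ^ 2) * ((z - c) * p2 - p1)).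
  replace ((C * p3 * ((z - c) * (C * p1) - C * p0) - C * p2 * ((z - c) * (C * p2) - C * p1)) * (C * p0))
    with (C ^ 3 * X) by (unfold X; ring).
  replace (- al * (C * p2 * (C * p0) - (C * p1) ^ 2) * ((z - c) * (C * p2) - C * p1))
    with (C ^ 3 * (- Y)) by (unfold Y; ring).
  rewrite Rinv_mult, Rinv_opp.
  transitivity (C ^ 3 * / C ^ 3 * (- X * / Y)); [ring|].
  rewrite Rinv_r by (apply pow_nonzero; auto). ring.
Qed.

Theorem proposition4p7 (a b sigma rho c alpha x0 xinf : R)
  (hb : 0 < b) (hsigma : 0 < sigma) (hrho : 0 < rho) (hc : 0 < c) (halpha : 0 < alpha)
  (hx0 : c < x0)
  (hx0eq : (x0 - c) * Derive_n (psi a b sigma rho) 1 x0 - psi a b sigma rho x0 = 0)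
  (hx0uniq : forall y, c < y ->
     (y - c) * Derive_n (psi a b sigma rho) 1 y - psi a b sigma rho y = 0 -> y = x0)
  (hxinf : c < xinf)
  (hxinfeq : (xinf - c) * Derive_n (psi a b sigma rho) 2 xinf
               - Derive_n (psi a b sigma rho) 1 xinf = 0)
  (hxinfuniq : forall y, c < y ->
     (y - c) * Derive_n (psi a b sigma rho) 2 y - Derive_n (psi a b sigma rho) 1 y = 0 ->
     y = xinf) :
  let F := Ffun a b sigma rho c alpha x0 in
  (forall x y, xinf < x -> x < y -> y < x0 -> F y < F x) /\
  (forall (n : nat) (x : R), xinf < x <= x0 -> ex_derive_n F n x) /\
  filterlim F (at_right xinf) (Rbar_locally p_infty) /\
  filterlim (Derive F) (at_right xinf) (Rbar_locally m_infty).
Proof.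
  intros F.
  assert (HQ : QH (q a b sigma rho)).
  { constructor.
    - intros k z. apply q_deriv; auto.
    - intros k z. apply q_pos; auto.
    - intros z. apply q_logconvex; auto. }
  assert (Hp0 : forall y, psi a b sigma rho y = / Gamma (- (- rho / b)) * q a b sigma rho 0 y).
  { intros y. rewrite (psi_eq a b sigma rho hb hsigma). reflexivity. }
  assert (Hdn : forall n y, Derive_n (psi a b sigma rho) n y = / Gamma (- (- rho / b)) * q a b sigma rho n y).
  { intros n y. apply Dn_psi; auto. }
  set (C := / Gamma (- (- rho / b))) in *.
  destruct (Req_dec C 0) as [HC|HC].
  { exfalso. assert (E := hx0uniq (x0 + 1) ltac:(lra)).
    rewrite Hdn, Hp0, HC in E. assert (x0 + 1 = x0) by (apply E; ring). lra. }
  rewrite Hdn, Hp0 in hx0eq. rewrite !Hdn in hxinfeq.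
  assert (Hg : gf (q a b sigma rho) c x0 = 0).
  { assert (C * gf (q a b sigma rho) c x0 = 0) by (unfold gf; rewrite <- hx0eq; ring).
    destruct (Rmult_integral _ _ H); auto. contradiction. }
  assert (Hh : hf (q a b sigma rho) c xinf = 0).
  { assert (C * hf (q a b sigma rho) c xinf = 0) by (unfold hf; rewrite <- hxinfeq; ring).
    destruct (Rmult_integral _ _ H); auto. contradiction. }
  apply (main_abstract (q a b sigma rho) c alpha x0 xinf (Theta a b sigma rho c alpha)); auto.
  intros z Hz. unfold Theta. cbv zeta. rewrite !Hdn, Hp0.
  rewrite theta_alg by auto. reflexivity.
Qed.
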